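(* Let $\gamma(n)>0$ and $a(n)\ge\frac12$ be sequences, $\rho_0=\sqrt{1+e^{W_0(2/e^2)+2}}$, and $$\sigma(n)\defeq\frac{a(n)+\gamma(n)}{W_0\!\left(\frac{1}{2\rho_0\gamma(n)}+\frac1{\rho_0}\right)}.$$ Then $\sigma(n)\in O\big(a(n)\log(1/\gamma(n))^{-1}\big)$ if $\gamma(n)\in o(1)$, and $\sigma(n)\in O(a(n)+\gamma(n))$ if $\gamma(n)\in\Omega(1)$.
   Context: $W_0$ is the principal branch of the Lambert W function. In the paper, $\sigma(n)=s(\varepsilon=n^{-a})/\log n$ is the normalised Taylor order, $\gamma(n)=\beta R_{\mathbf Q}R_{\mathbf K}/\log n$ the normalised entry size, and $a(n)$ the error exponent. Asymptotics are as $n\to\infty$. *)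

(* Defs.v *)
From Stdlib Require Import Reals Lra ClassicalEpsilon.
Open Scope R_scope.

(* Principal branch W_0 of the Lambert W function: for x >= -1/e, the unique
   w >= -1 with w * exp w = x (chosen by Hilbert's epsilon; its value outside
   the domain x >= -1/e is irrelevant here since it is only applied to
   positive arguments). *)
Definition W0 (x : R) : R :=
  epsilon (inhabits 0) (fun w => -1 <= w /\ w * exp w = x).

Definition rho0 : R := sqrt (1 + exp (W0 (2 / (exp 1) ^ 2) + 2)).

Definition sigmaT (a gamma : nat -> R) (n : nat) : R :=
  (a n + gamma n) / W0 (1 / (2 * rho0 * gamma n) + 1 / rho0).

Definition bigO (u v : nat -> R) : Prop :=
  exists C : R, exists N : nat, forall n, (N <= n)%nat -> Rabs (u n) <= C * Rabs (v n).
Definition littleo (u v : nat -> R) : Prop :=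
  forall eps : R, 0 < eps -> exists N : nat, forall n, (N <= n)%nat ->
    Rabs (u n) <= eps * Rabs (v n).
(* u in Omega(v)  (Knuth's convention: eventually |u| >= c |v| with c > 0) *)
Definition bigOmega (u v : nat -> R) : Prop :=
  exists c : R, 0 < c /\ exists N : nat, forall n, (N <= n)%nat ->
    c * Rabs (v n) <= Rabs (u n).

(* Main.v *)
Require Import Defs.
From Stdlib Require Import Reals Lra ClassicalEpsilon.
Open Scope R_scope.

Lemma ln_le' x y : 0 < x -> x <= y -> ln x <= ln y.
Proof. intros Hx Hxy; destruct (Rle_lt_or_eq_dec _ _ Hxy) as [H|H].
  - left; apply ln_increasing; lra.
  - subst; lra. Qed.

Lemma W0_spec x : 0 < x -> 0 < W0 x /\ W0 x * exp (W0 x) = x.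
Proof.
  intros Hx.
  assert (Hex : exists w, -1 <= w /\ w * exp w = x).
  { assert (Hc : continuity (fun w => w * exp w - x)).
    { apply continuity_minus; [apply continuity_mult|apply continuity_const; intros ? ?; reflexivity].
      - apply derivable_continuous, derivable_id.
      - apply derivable_continuous, derivable_exp. }
    assert (He : 1 < exp x). { pose proof (exp_ineq1_le x); pose proof (exp_pos x). lra. }
    destruct (IVT _ 0 x Hc Hx) as [z [Hz1 Hz2]].
    - rewrite Rmult_0_l; lra.
    - nra.
    - exists z; split; lra. }
  pose proof (epsilon_spec (inhabits 0) _ Hex) as [H1 H2].
  change (-1 <= W0 x) in H1; change (W0 x * exp (W0 x) = x) in H2.
  split; [|exact H2].
  pose proof (exp_pos (W0 x)).
  destruct (Rle_or_lt (W0 x) 0) as [Hle|]; [|lra]. assert (W0 x * exp (W0 x) <= 0) by (rewrite <- (Rmult_0_l (exp (W0 x))); apply Rmult_le_compat_r; lra). lra.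
Qed.

Lemma rho0_gt1 : 1 < rho0.
Proof.
  unfold rho0. pose proof (exp_pos (W0 (2 / exp 1 ^ 2) + 2)).
  assert (Hs : sqrt 1 < sqrt (1 + exp (W0 (2 / exp 1 ^ 2) + 2))) by (apply sqrt_lt_1; lra). rewrite sqrt_1 in Hs; exact Hs.
Qed.

Lemma W0_lb_ln x : 0 < x -> ln x <= 2 * W0 x.
Proof.
  intros Hx. destruct (W0_spec x Hx) as [Hp He].
  pose proof (exp_ineq1_le (W0 x)). pose proof (exp_pos (W0 x)).
  assert (x <= exp (2 * W0 x)).
  { replace (2 * W0 x) with (W0 x + W0 x) by ring. rewrite exp_plus. nra. }
  rewrite <- (ln_exp (2 * W0 x)). apply ln_le'; lra.
Qed.

Lemma W0_lb_const x : 1 / rho0 <= x -> Rmin 1 (1 / (exp 1 * rho0)) <= W0 x.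
Proof.
  intros Hx. pose proof rho0_gt1.
  assert (Hr : 0 < 1 / rho0) by (apply Rdiv_lt_0_compat; lra).
  destruct (W0_spec x ltac:(lra)) as [Hp He].
  destruct (Rle_or_lt (W0 x) 1) as [H1|H1].
  - apply Rle_trans with (1 / (exp 1 * rho0)); [apply Rmin_r|].
    assert (exp (W0 x) <= exp 1) by (destruct (Rle_lt_or_eq_dec _ _ H1);
      [left; apply exp_increasing; auto| subst; rewrite e; lra]).
    pose proof (exp_pos 1).
    assert (x <= W0 x * exp 1) by nra.
    unfold Rdiv; rewrite Rmult_1_l, Rinv_mult.
    apply Rmult_le_reg_l with (exp 1); [lra|].
    rewrite <- Rmult_assoc, Rinv_r, Rmult_1_l by lra. unfold Rdiv in Hx. nra.
  - apply Rle_trans with 1; [apply Rmin_l|lra].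
Qed.

Theorem lemmaI2 (gamma a : nat -> R)
  (Hg : forall n, 0 < gamma n) (Ha : forall n, 1 / 2 <= a n) :
  (littleo gamma (fun _ => 1) ->
     bigO (sigmaT a gamma) (fun n => a n * / ln (1 / gamma n))) /\
  (bigOmega gamma (fun _ => 1) ->
     bigO (sigmaT a gamma) (fun n => a n + gamma n)).
Proof.
  pose proof rho0_gt1 as Hr.
  split.
  - intros Ho.
    set (K := 2 * rho0).
    assert (HK : 2 < K) by (unfold K; lra).
    destruct (Ho (/ (K * K))) as [N HN].
    { apply Rinv_0_lt_compat; nra. }
    exists 12, N. intros n Hn. specialize (HN n Hn).
    specialize (Hg n); specialize (Ha n).
    rewrite Rabs_R1, Rmult_1_r, Rabs_right in HN by lra.
    set (g := gamma n) in *.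
    assert (Hig : K * K <= 1 / g).
    { unfold Rdiv; rewrite Rmult_1_l.
      rewrite <- (Rinv_inv (K * K)). apply Rinv_le_contravar; auto. }
    set (L := ln (1 / g)).
    assert (HlK : 0 < ln K) by (rewrite <- ln_1; apply ln_increasing; lra).
    assert (HL : 2 * ln K <= L).
    { unfold L. replace (2 * ln K) with (ln (K * K)) by (rewrite ln_mult; lra).
      apply ln_le'; nra. }
    set (x := 1 / (2 * rho0 * g) + 1 / rho0).
    assert (Hx1 : 1 / (2 * rho0 * g) = (1 / g) * / K).
    { unfold K; field; lra. }
    assert (Hpos1 : 0 < 1 / (2 * rho0 * g)).
    { apply Rdiv_lt_0_compat; nra. }
    assert (Hpos2 : 0 < 1 / rho0) by (apply Rdiv_lt_0_compat; lra).
    assert (Hxl : L - ln K <= ln x).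
    { apply Rle_trans with (ln (1 / (2 * rho0 * g))).
      - rewrite Hx1, ln_mult, ln_Rinv; [unfold L; lra|lra|nra|apply Rinv_0_lt_compat; lra].
      - apply ln_le'; unfold x; lra. }
    pose proof (W0_lb_ln x ltac:(unfold x; lra)) as HW.
    assert (HWp : L / 4 <= W0 x) by lra.
    assert (HL0 : 0 < L) by lra.
    assert (HWpos : 0 < W0 x) by lra.
    unfold sigmaT. fold g. fold x.
    rewrite Rabs_right.
    2: { apply Rle_ge, Rlt_le, Rdiv_lt_0_compat; lra. }
    rewrite Rabs_right.
    2: { apply Rle_ge, Rlt_le, Rmult_lt_0_compat; [lra|apply Rinv_0_lt_compat; lra]. }
    assert (Hg1 : g <= 1).
    { apply Rle_trans with (/ (K*K)); auto.
      rewrite <- Rinv_1. apply Rinv_le_contravar; nra. }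
    unfold Rdiv.
    apply Rle_trans with ((a n + g) * (4 / L)).
    + apply Rmult_le_compat_l; [lra|].
      replace (4 / L) with (/ (L / 4)) by (field; lra).
      apply Rinv_le_contravar; lra.
    + unfold Rdiv. assert (0 < / L) by (apply Rinv_0_lt_compat; lra). nra.
  - intros _.
    set (c := Rmin 1 (1 / (exp 1 * rho0))).
    assert (Hc : 0 < c).
    { unfold c; apply Rmin_glb_lt; [lra|]. pose proof (exp_pos 1).
      apply Rdiv_lt_0_compat; nra. }
    exists (/ c), 0%nat. intros n _.
    specialize (Hg n); specialize (Ha n).
    set (x := 1 / (2 * rho0 * gamma n) + 1 / rho0).
    assert (Hpos1 : 0 < 1 / (2 * rho0 * gamma n)).
    { apply Rdiv_lt_0_compat; nra. }
    pose proof (W0_lb_const x ltac:(unfold x; lra)) as HW. fold c in HW.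
    unfold sigmaT; fold x.
    rewrite Rabs_right.
    2: { apply Rle_ge, Rlt_le, Rdiv_lt_0_compat; lra. }
    rewrite (Rabs_right (a n + gamma n)) by lra.
    unfold Rdiv. rewrite Rmult_comm.
    apply Rmult_le_compat_r; [lra|].
    apply Rinv_le_contravar; lra.
Qed.
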